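(* Let $w>2$ and let $\tilde f\in\mathbb L_w$. Write $\tilde f=\tilde f_x x+\tilde f_y y$ with $\tilde f_x,\tilde f_y\in\mathbb A$ homogeneous of degree $w-1$, and put $g=\tilde f_y+\tilde f_x$. Then $g$ is anti-palindromic, i.e. $g=(-1)^{w-1}\mathrm{anti}(g)$, if and only if the mould $M=\mathrm{ma}_{\tilde f}$ satisfies the senary relation $$\mathrm{teru}(M)^r=\bigl(\mathrm{push}\circ\mathrm{mantar}\circ\mathrm{teru}\circ\mathrm{mantar}\bigr)(M)^r$$ for all $1\leqslant r\leqslant w$.
   Context: $\mathbb A=\mathbb Q\langle x,y\rangle$ is the free associative algebra on $x,y$ graded by total degree, and $\mathbb L_w\subset\mathbb A$ is the space of homogeneous Lie polynomials of degree $w$ in $x,y$. $\mathrm{anti}:\mathbb A\to\mathbb A$ is the linear map reversing each word: $\mathrm{anti}(a_1a_2\cdots a_n)=a_n\cdots a_2a_1$ for letters $a_i\in\{x,y\}$. Moulds. A mould is a sequence $M=(M^m)_{m\geqslant 0}$ with $M^0\in\mathbb Q$ and $M^m=M^m(x_1,\dots,x_m)\in\mathbb Q[x_1,\dots,x_m]$; $M^m(u_1,\dots,u_m)$ denotes substitution $x_i\mapsto u_i$. For $m\geqslant1$: $\mathrm{teru}(M)^1=M^1$, and for $m\geqslant2$, $\mathrm{teru}(M)^m(u_1,\dots,u_m)=M^m(u_1,\dots,u_m)+\frac{1}{u_m}\{M^{m-1}(u_1,\dots,u_{m-2},u_{m-1}+u_m)-M^{m-1}(u_1,\dots,u_{m-2},u_{m-1})\}$;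 $\mathrm{mantar}(M)^m(u_1,\dots,u_m)=(-1)^{m-1}M^m(u_m,\dots,u_1)$; $\mathrm{push}(M)^m(u_1,\dots,u_m)=M^m(-u_1-\cdots-u_m,u_1,\dots,u_{m-1})$ (in depth $0$: $\mathrm{teru}(M)^0=\mathrm{push}(M)^0=M^0$, $\mathrm{mantar}(M)^0=-M^0$). The mould $\mathrm{ma}_h$: for $h\in\mathbb A$ homogeneous of degree $w$, write $h=\sum_{r=0}^w\sum a_{e_0,\dots,e_r}x^{e_0}yx^{e_1}y\cdots yx^{e_r}$ (sum over $(e_0,\dots,e_r)\in\mathbb Z_{\geqslant0}^{r+1}$, $\sum e_i=w-r$). Set $\mathrm{ma}_h^0=0$, $\mathrm{ma}_h^r=0$ for $r>w$, and for $1\le r\le w$, $\mathrm{ma}_h^r(u_1,\dots,u_r)=\sum a_{e_0,\dots,e_r}z_0^{e_0}\cdots z_r^{e_r}$ evaluated at $z_0=0$, $z_j=u_1+\cdots+u_j$ (with $0^0=1$). *)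

(* Defs.v *)
From HB Require Import structures.
From mathcomp Require Import all_boot all_order all_algebra.
From mathcomp Require Import fraction.
From mathcomp.multinomials Require Import mpoly.
Set Implicit Arguments. Unset Strict Implicit. Unset Printing Implicit Defensive.
Import Order.TTheory GRing.Theory Num.Theory.
Local Open Scope ring_scope.

(* The free associative algebra A = Q<x,y>.                                *)
(* Words are seq bool with the letter x encoded as false and y as true.    *)
(* An element of A is represented by its coefficient function              *)
(* seq bool -> rat (word |-> coefficient).                                 *)
Definition lx : bool := false.
Definition ly : bool := true.

Definition ncpoly := seq bool -> rat.

Definition ncword (s : seq bool) : ncpoly := fun t => (t == s)%:R.

(* product a*b of a homogeneous of degree i with b homogeneous *)
Definition ncmul (i : nat) (a b : ncpoly) : ncpoly :=
  fun t => a (take i t) * b (drop i t).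

Inductive is_lie : nat -> ncpoly -> Prop :=
| lie_x : is_lie 1 (ncword [:: lx])
| lie_y : is_lie 1 (ncword [:: ly])
| lie_bracket i j a b : is_lie i a -> is_lie j b ->
    is_lie (i + j) (fun t => ncmul i a b t - ncmul j b a t)
| lie_zero n : is_lie n (fun _ => 0)
| lie_add n a b : is_lie n a -> is_lie n b -> is_lie n (fun t => a t + b t)
| lie_scale n (c : rat) a : is_lie n a -> is_lie n (fun t => c * a t)
| lie_ext n a b : is_lie n a -> (forall t, a t = b t) -> is_lie n b.

Definition anti (g : ncpoly) : ncpoly := fun t => g (rev t).

Definition part_x (f : ncpoly) : ncpoly := fun u => f (rcons u lx).
Definition part_y (f : ncpoly) : ncpoly := fun u => f (rcons u ly).

(* Moulds.  A mould with values in a field K is a family of functions     *)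
(* M m : (nat -> K) -> K, where M m u stands for M^m(u 0, ..., u (m-1))     *)
(* (only the first m entries of u are used).  Polynomial identities are   *)
(* checked by evaluating at the generic point of the rational function    *)
(* field Q(X_0, X_1, ...), see [generic] below.                            *)
Definition mould (K : fieldType) := nat -> (nat -> K) -> K.

Definition teru (K : fieldType) (M : mould K) : mould K :=
  fun m u =>
    if (m <= 1)%N then M m u
    else M m u + (u m.-1)^-1 *
           (M m.-1 (fun i => if (i == m.-2)%N then u m.-2 + u m.-1 else u i)
            - M m.-1 u).

Definition mantar (K : fieldType) (M : mould K) : mould K :=
  fun m u =>
    if (m == 0)%N then - M 0 u
    else (-1) ^+ m.-1 * M m (fun i => u (m.-1 - i)%N).

Definition push (K : fieldType) (M : mould K) : mould K :=
  fun m u =>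
    M m (fun i => if i is i'.+1 then u i' else - \sum_(k < m) u k).

(* ma_h for h homogeneous of degree w:                                     *)
(* ma_h^r(u) = sum over words x^{e0} y x^{e1} ... y x^{er} of length w of  *)
(*   coeff * z_0^{e0} ... z_r^{er},  z_j = u_1 + ... + u_j  (z_0 = 0,      *)
(*   0^0 = 1).  Each letter x occurring after exactly j letters y         *)
(*   contributes the factor z_j.                                           *)
Definition zsum (K : fieldType) (u : nat -> K) (j : nat) : K :=
  \sum_(k < j) u k.

Definition ma (K : fieldType) (w : nat) (h : ncpoly) : mould K :=
  fun r u =>
    if (r == 0)%N then 0
    else \sum_(t : w.-tuple bool | (count id t == r)%N)
           ratr (h t) *
           \prod_(i < w | tnth t i == lx) zsum u (count id (take i t)).

Definition ratfun (n : nat) := {fraction {mpoly rat[n]}}.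

Definition generic (n : nat) : nat -> ratfun n :=
  fun i => if (i < n)%N =P true is ReflectT H then @FracField.tofrac _ 'X_(Ordinal H) else 0.

(* Main.v *)
Require Import Defs.
From HB Require Import structures.
From mathcomp Require Import all_boot all_order all_algebra.
From mathcomp Require Import fraction.
From mathcomp.multinomials Require Import mpoly.
From mathcomp Require Import ring.
Import GRing.Theory.
Local Open Scope ring_scope.

Section SWsec.
Variable R : comRingType.

Fixpoint SW (n : nat) (F : seq bool -> R) : R :=
  match n with
  | 0 => F [::]
  | n'.+1 => SW n' (fun s => F (false :: s)) + SW n' (fun s => F (true :: s))
  end.

Lemma SW_ext n F G : (forall s, size s = n -> F s = G s) -> SW n F = SW n G.
Proof.
elim: n F G => [|n IH] F G H /=; first exact: H.
by congr (_ + _); apply: IH => s Hs; apply: H; rewrite /= Hs.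
Qed.

Lemma SW_add n F G : SW n (fun s => F s + G s) = SW n F + SW n G.
Proof. by elim: n F G => [|n IH] F G //=; rewrite !IH addrACA. Qed.

Lemma SW_scale n c F : SW n (fun s => c * F s) = c * SW n F.
Proof. by elim: n F => [|n IH] F //=; rewrite !IH mulrDr. Qed.

Lemma SW_scaler n c F : SW n (fun s => F s * c) = SW n F * c.
Proof. by rewrite mulrC -SW_scale; apply: SW_ext => s _; rewrite mulrC. Qed.

Lemma SW_0 n : SW n (fun _ => 0) = 0.
Proof. by elim: n => [|n IH] //=; rewrite IH addr0. Qed.

Lemma SW_opp n F : SW n (fun s => - F s) = - SW n F.
Proof. by elim: n F => [|n IH] F //=; rewrite !IH opprD. Qed.

Lemma SW_sub n F G : SW n (fun s => F s - G s) = SW n F - SW n G.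
Proof. by rewrite SW_add SW_opp. Qed.

Lemma SW_sum n m (F : nat -> seq bool -> R) :
  SW n (fun s => \sum_(k < m) F k s) = \sum_(k < m) SW n (F k).
Proof.
elim: n F => [|n IH] F //=.
by rewrite (IH (fun k s => F k (false :: s))) (IH (fun k s => F k (true :: s))) -big_split.
Qed.

Lemma SW_sumr n m (F : nat -> seq bool -> R) :
  \sum_(k < m) SW n (fun s => F k s) = SW n (fun s => \sum_(k < m) F k s).
Proof. by rewrite SW_sum. Qed.

Lemma SW_rcons n F :
  SW n.+1 F = SW n (fun s => F (rcons s false) + F (rcons s true)).
Proof.
elim: n F => [|n IH] F; first by [].
transitivity (SW n.+1 (fun s => F (false::s)) + SW n.+1 (fun s => F (true :: s))).
  by [].
by rewrite (IH (fun s => F (false :: s))) (IH (fun s => F (true :: s))).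
Qed.

Lemma SW_cat i j F :
  SW (i + j) F = SW i (fun s => SW j (fun t => F (s ++ t))).
Proof.
elim: i F => [|i IH] F //=.
by rewrite (IH (fun s => F (false :: s))) (IH (fun s => F (true :: s))).
Qed.

Lemma SW_rev n F : SW n F = SW n (fun s => F (rev s)).
Proof.
elim: n F => [|n IH] F; first by [].
rewrite [RHS]SW_rcons [LHS]/= (IH (fun s => F (false :: s))) (IH (fun s => F (true :: s))) -SW_add.
apply: SW_ext => s _.
by rewrite !rev_rcons.
Qed.

Lemma SW_delta n s0 a : size s0 = n ->
  SW n (fun s => if s == s0 then a else 0) = a.
Proof.
elim: s0 n => [|b s0 IH] [|n] //= [Hn].
case: b.
- rewrite (@SW_ext _ _ (fun _ => 0)); last by move=> s _.
  rewrite SW_0 add0r -{2}(IH n Hn); apply: SW_ext => s _.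
  by rewrite eqseq_cons.
- rewrite [X in _ + X](@SW_ext _ _ (fun _ => 0)); last by move=> s _.
  rewrite SW_0 addr0 -{2}(IH n Hn); apply: SW_ext => s _.
  by rewrite eqseq_cons.
Qed.

Lemma SW_tuple n (F : seq bool -> R) :
  \sum_(t : n.-tuple bool) F t = SW n F.
Proof.
elim: n F => [|n IH] F.
  rewrite (big_pred1 [tuple]) //= => t; apply/esym/eqP; exact: tuple0.
rewrite (reindex (fun p : bool * n.-tuple bool => [tuple of p.1 :: p.2])) /=; last first.
  exists (fun t : n.+1.-tuple bool => (thead t, [tuple of behead t])).
    by case=> b t _; congr (_, _); apply: val_inj.
  by move=> t _; rewrite [RHS]tuple_eta.
rewrite -(pair_big predT predT (fun b (t : n.-tuple bool) => F (b :: t))) /=.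
rewrite big_bool /=.
by rewrite (IH (fun s => F (true :: s))) (IH (fun s => F (false :: s))) addrC.
Qed.

End SWsec.
Arguments SW {R}.

Lemma SW_morph (R S : comRingType) (f : R -> S)
  (Hf : forall x y, f (x + y) = f x + f y) n F :
  f (SW n F) = SW n (fun s => f (F s)).
Proof. by elim: n F => [|n IH] F //=; rewrite Hf !IH. Qed.

Section Mon.
Variable R : comRingType.

Fixpoint mon (z : nat -> R) (s : seq bool) : R :=
  match s with
  | [::] => 1
  | b :: s' => if b then mon (fun j => z j.+1) s' else z 0%N * mon z s'
  end.

Lemma mon_ext s z z' : (forall j, (j <= count id s)%N -> z j = z' j) ->
  mon z s = mon z' s.
Proof.
elim: s z z' => [|b s IH] z z' H //=.
case: b H => /= H.
  by apply: IH => j Hj; apply: H; rewrite add1n ltnS.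
by rewrite H // (IH z z') // => j Hj; apply: H; rewrite add0n.
Qed.

Lemma mon_cat z s t :
  mon z (s ++ t) = mon z s * mon (fun j => z (count id s + j)%N) t.
Proof.
elim: s z => [|b s IH] z /=.
  by rewrite mul1r.
case: b => /=.
  rewrite IH; congr (_ * _); apply: mon_ext => j _; by rewrite add1n addSn.
by rewrite IH mulrA.
Qed.

Lemma mon_rcons z s b :
  mon z (rcons s b) = mon z s * (if b then 1 else z (count id s)).
Proof.
rewrite -cats1 mon_cat; congr (_ * _); case: b => //=.
by rewrite addn0 mulr1.
Qed.

Lemma mon_rev z s :
  mon (fun j => z (count id s - j)%N) (rev s) = mon z s.
Proof.
elim: s z => [|b s IH] z //=.
rewrite rev_cons mon_rcons count_rev.
case: b => /=.
  rewrite mulr1 -(IH (fun j => z j.+1)); apply: mon_ext => j; rewrite count_rev => Hj.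
  by rewrite add1n subSn.
rewrite add0n subnn mulrC; congr (_ * _); rewrite -(IH z) //.
Qed.

Lemma mon_opp z s :
  mon (fun j => - z j) s = (-1) ^+ (size s - count id s) * mon z s.
Proof.
elim: s z => [|b s IH] z /=.
  by rewrite expr0 mulr1.
case: b => /=.
  by rewrite IH add1n subSS.
rewrite IH add0n subSn ?count_size // exprS.
ring.
Qed.

Lemma mon_ma z s n : size s = n ->
  \prod_(i < n | nth false s i == false) z (count id (take i s)) = mon z s.
Proof.
elim: s z n => [|b s IH] z [|n] //=; first by rewrite big_ord0.
move=> [Hn].
rewrite big_mkcond big_ord_recl /= -big_mkcond /=.
case: b => /=.
  rewrite mul1r -(IH (fun j => z j.+1) n Hn); apply: eq_bigr => i _.
  by rewrite add1n.
congr (_ * _); rewrite -(IH z n Hn); apply: eq_bigr => i _.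
by rewrite add0n.
Qed.

End Mon.
Arguments mon {R}.

Section PPsec.
Variable R : comRingType.

Definition PP n (cf : seq bool -> R) (r : nat) (z : nat -> R) : R :=
  SW n (fun s => if count id s == r then cf s * mon z s else 0).

Lemma PP_ext n cf r z z' : (forall j, (j <= r)%N -> z j = z' j) ->
  PP n cf r z = PP n cf r z'.
Proof.
move=> H; apply: SW_ext => s _; case: eqP => // Hc.
by rewrite (@mon_ext _ s z z') // => j; rewrite Hc; apply: H.
Qed.

Lemma PP_extc n cf cf' r z : (forall s, size s = n -> cf s = cf' s) ->
  PP n cf r z = PP n cf' r z.
Proof. by move=> H; apply: SW_ext => s Hs; rewrite H. Qed.

Lemma PP_add n cf1 cf2 r z :
  PP n (fun s => cf1 s + cf2 s) r z = PP n cf1 r z + PP n cf2 r z.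
Proof.
rewrite /PP -SW_add; apply: SW_ext => s _; case: eqP => _; last by rewrite addr0.
by rewrite mulrDl.
Qed.

Lemma PP_scale n c cf r z :
  PP n (fun s => c * cf s) r z = c * PP n cf r z.
Proof.
rewrite /PP -SW_scale; apply: SW_ext => s _; case: eqP => _; last by rewrite mulr0.
by rewrite mulrA.
Qed.

Lemma PP_sub n cf1 cf2 r z :
  PP n (fun s => cf1 s - cf2 s) r z = PP n cf1 r z - PP n cf2 r z.
Proof.
rewrite /PP -SW_sub; apply: SW_ext => s _; case: eqP => _; last by rewrite subr0.
by rewrite mulrBl.
Qed.

Lemma PP_opp n cf r z :
  PP n cf r (fun j => - z j) = (-1) ^+ (n - r) * PP n cf r z.
Proof.
rewrite /PP -SW_scale; apply: SW_ext => s Hs; case: eqP => Hc; last by rewrite mulr0.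
by rewrite mon_opp Hs Hc mulrCA.
Qed.

Lemma PP_rev n cf r z :
  PP n cf r (fun j => z (r - j)%N) = PP n (fun s => cf (rev s)) r z.
Proof.
rewrite /PP [RHS]SW_rev; apply: SW_ext => s _.
rewrite count_rev revK; case: eqP => // Hc.
have := @mon_rev _ z (rev s); rewrite revK count_rev Hc => ->.
done.
Qed.

Lemma count_rcons' s (b : bool) : count id (rcons s b) = (count id s + b)%N.
Proof. by rewrite -cats1 count_cat /= addn0. Qed.

Lemma PP_lastP n cf k z : z k.+1 = 0 ->
  PP n.+1 cf k.+1 z = PP n (fun s => cf (rcons s true)) k z.
Proof.
move=> Hz; rewrite /PP SW_rcons; apply: SW_ext => s _.
rewrite !count_rcons' /= !mon_rcons /= addn0 addn1 eqSS mulr1.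
case: (count id s =P k.+1) => [->|_]; first by rewrite Hz !mulr0 add0r.
by rewrite add0r.
Qed.

Lemma PP_lastH n cf k z :
  PP n.+1 cf k (fun j => if j == k then 0 else z j) - PP n.+1 cf k z
  = - z k * PP n (fun s => cf (rcons s false)) k z.
Proof.
rewrite /PP -SW_sub SW_rcons -SW_scale; apply: SW_ext => s _.
rewrite !count_rcons' /= !mon_rcons /= addn0 addn1 !mulr1.
have [Hc|Hc] := eqVneq (count id s) k.
  by rewrite Hc gtn_eqF //; ring.
rewrite subrr add0r mulr0.
case: eqP => Hk; last by rewrite subrr.
rewrite (@mon_ext _ s (fun j : nat => if j == k then 0 else z j) z) ?subrr //.
by move=> j Hj; rewrite -Hk; case: eqP => // Hj'; move: Hj; rewrite Hj' ltnn.
Qed.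

End PPsec.
Arguments PP {R}.

From mathcomp Require Import zify.

Lemma mon_morph (R S : comRingType) (f : {rmorphism R -> S}) z s :
  f (mon z s) = mon (fun j => f (z j)) s.
Proof.
elim: s z => [|b s IH] z /=; first exact: rmorph1.
by case: b; rewrite ?rmorphM IH.
Qed.

Lemma PP_morph (R S : comRingType) (f : {rmorphism R -> S}) n cf r z :
  f (PP n cf r z) = PP n (fun s => f (cf s)) r (fun j => f (z j)).
Proof.
rewrite /PP (@SW_morph _ _ f (rmorphD f)); apply: SW_ext => s _; case: eqP => _; last exact: rmorph0.
by rewrite (rmorphM f) mon_morph.
Qed.

Lemma sum_delta (R : comRingType) (a b r : nat) (X : nat -> R) :
  \sum_(k < r.+1) (if (a == k) && (b == r - k)%N then X (k : nat) else 0)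
  = if (a + b == r)%N then X a else 0.
Proof.
case: (leqP a r) => Ha.
  rewrite (bigD1 (Ordinal (Ha : (a < r.+1)%N))) //= eqxx /= big1 ?addr0.
    have -> : (a + b == r)%N = (b == r - a)%N by apply/eqP/eqP; lia.
    done.
  move=> k Hk; case: eqP => // Hak; exfalso; move: Hk; rewrite -val_eqE /= Hak eqxx //.
rewrite big1; last first.
  move=> k _; case: eqP => // Hak; exfalso; have := ltn_ord k; lia.
case: eqP => // ?; lia.
Qed.

Lemma ncmul_supp i j (a b : ncpoly) t :
  (forall t, size t != i -> a t = 0) -> (forall t, size t != j -> b t = 0) ->
  size t != (i + j)%N -> ncmul i a b t = 0.
Proof.
move=> Ha Hb Ht; rewrite /ncmul.
case E: (size (take i t) == i).
  rewrite (Hb (drop i t)) ?mulr0 // size_drop.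
  move: E Ht; rewrite size_take; case: ifP => H /eqP E /eqP Ht; apply/eqP; lia.
by rewrite Ha ?mul0r // E.
Qed.

Lemma lie_supp n a : is_lie n a -> forall t, size t != n -> a t = 0.
Proof.
elim=> {n a} /=.
- move=> t Ht; rewrite /ncword; case: eqP => // Et; move: Ht; by rewrite Et.
- move=> t Ht; rewrite /ncword; case: eqP => // Et; move: Ht; by rewrite Et.
- move=> i j a b _ Ha _ Hb t Ht.
  by rewrite (@ncmul_supp i j a b t Ha Hb Ht) (@ncmul_supp j i b a t Hb Ha) ?subrr // addnC.
- by [].
- by move=> n a b _ Ha _ Hb t Ht; rewrite Ha ?Hb ?addr0.
- by move=> n c a _ Ha t Ht; rewrite Ha ?mulr0.
- by move=> n a b _ Ha E t Ht; rewrite -E Ha.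
Qed.

Lemma lie_deg0 n a : is_lie n a -> n = 0%N -> forall t, a t = 0.
Proof.
elim=> {n a} //=.
- move=> i j a b _ Ha _ Hb E t.
  have Ei : i = 0%N by lia.
  have Ej : j = 0%N by lia.
  by rewrite /ncmul !Ha // mul0r mulr0 subrr.
- by move=> n a b _ Ha _ Hb E t; rewrite Ha ?Hb ?addr0.
- by move=> n c a _ Ha E t; rewrite Ha ?mulr0.
- by move=> n a b _ Ha E E0 t; rewrite -E Ha.
Qed.

Lemma lie_anti n a : is_lie n a -> forall t, a (rev t) = (-1) ^+ n.-1 * a t.
Proof.
have Hw : forall b t, ncword [:: b] (rev t) = ncword [:: b] t.
  by move=> b t; rewrite /ncword -(inj_eq (inv_inj (@revK _))) revK.
elim=> {n a} /=.
- by move=> t; rewrite Hw expr0 mul1r.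
- by move=> t; rewrite Hw expr0 mul1r.
- move=> i j a b Hla Ha Hlb Hb t.
  case: i Hla Ha => [|i] Hla Ha.
    by rewrite /ncmul !(@lie_deg0 _ _ Hla (erefl _)) !mul0r !mulr0 !subrr ?mulr0.
  case: j Hlb Hb => [|j] Hlb Hb.
    by rewrite /ncmul !(@lie_deg0 _ _ Hlb (erefl _)) !mul0r !mulr0 !subrr ?mulr0.
  have Sa := @lie_supp _ _ Hla; have Sb := @lie_supp _ _ Hlb.
  have [Ht|Ht] := eqVneq (size t) (i.+1 + j.+1)%N; last first.
    rewrite (@ncmul_supp _ _ a b t Sa Sb Ht) (@ncmul_supp _ _ b a t Sb Sa); last by rewrite addnC.
    rewrite (@ncmul_supp _ _ a b (rev t) Sa Sb); last by rewrite size_rev.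
    rewrite (@ncmul_supp _ _ b a (rev t) Sb Sa); last by rewrite size_rev addnC.
    by rewrite subrr mulr0.
  rewrite /ncmul !take_rev !drop_rev Ht.
  have -> : (i.+1 + j.+1 - i.+1 = j.+1)%N by lia.
  have -> : (i.+1 + j.+1 - j.+1 = i.+1)%N by lia.
  rewrite !Ha !Hb /=.
  rewrite addnS exprS exprD; ring.

- by move=> n t; rewrite mulr0.
- by move=> n a b _ Ha _ Hb t; rewrite Ha Hb mulrDr.
- by move=> n c a _ Ha t; rewrite Ha mulrCA.
- by move=> n a b _ Ha E t; rewrite -!E Ha.
Qed.

Section Psec.
Variable K : fieldType.
Variable phi : {rmorphism rat -> K}.

Definition P n (h : ncpoly) r (z : nat -> K) := PP n (fun s => phi (h s)) r z.

Lemma P_bracket n i j a b r z : n = (i + j)%N ->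
  P n (ncmul i a b) r z
  = \sum_(k < r.+1) P i a k z * P j b (r - k) (fun l => z (k + l)%N).
Proof.
move=> ->; rewrite /P /PP SW_cat.
pose G (k : nat) s t := if (count id s == k) && (count id t == r - k)%N then
     phi (a s) * phi (b t) * (mon z s * mon (fun l => z (k + l)%N) t) else (0 : K).
transitivity (SW i (fun s => \sum_(k < r.+1) SW j (fun t => G k s t))).
  apply: SW_ext => s Hs; rewrite -(@SW_sum _ j r.+1 (fun k t => G k s t)); apply: SW_ext => t Ht.
  rewrite /G (@sum_delta _ _ _ _ (fun k => phi (a s) * phi (b t) * (mon z s * mon (fun l => z (k + l)%N) t))) count_cat /ncmul take_size_cat // drop_size_cat // mon_cat.
  by case: eqP => // _; rewrite rmorphM.
rewrite (@SW_sum _ i r.+1 (fun k s => SW j (fun t => G k s t))); apply: eq_bigr => k _.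
rewrite -SW_scaler; apply: SW_ext => s _.
rewrite /G; case: eqP => _ /=; last by rewrite mul0r SW_0.
rewrite -SW_scale; apply: SW_ext => t _; case: eqP => _ //; last by rewrite mulr0.
by rewrite mulrACA.
Qed.

Lemma P_ext n h r z z' : (forall j, (j <= r)%N -> z j = z' j) ->
  P n h r z = P n h r z'.
Proof. exact: PP_ext. Qed.

Lemma P_extc n h h' r z : (forall s, h s = h' s) -> P n h r z = P n h' r z.
Proof. by move=> H; apply: PP_extc => s _; rewrite H. Qed.

Lemma P_sub n h1 h2 r z :
  P n (fun s => h1 s - h2 s) r z = P n h1 r z - P n h2 r z.
Proof. by rewrite /P -PP_sub; apply: PP_extc => s _; rewrite rmorphB. Qed.

Lemma P_add n h1 h2 r z :
  P n (fun s => h1 s + h2 s) r z = P n h1 r z + P n h2 r z.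
Proof. by rewrite /P -PP_add; apply: PP_extc => s _; rewrite rmorphD. Qed.

Lemma P_scale n c h r z :
  P n (fun s => c * h s) r z = phi c * P n h r z.
Proof. by rewrite /P -PP_scale; apply: PP_extc => s _; rewrite rmorphM. Qed.

Lemma P_zero n r z : P n (fun _ => 0) r z = 0.
Proof.
rewrite /P /PP; transitivity (SW n (fun _ => (0:K))); last exact: SW_0.
apply: SW_ext => s _.
by rewrite rmorph0 mul0r; case: eqP.
Qed.

Lemma corr_sum r (A B : nat -> K) (a0 b0 : K) (p q : bool) :
  \sum_(k < r.+1) (A k + (if p && (k == 0%N :> nat) then a0 else 0)) *
                  (B k + (if q && (r - k == 0)%N then b0 else 0))
  = \sum_(k < r.+1) A k * B k
    + (if p then a0 * (B 0%N + (if q && (r == 0%N) then b0 else 0)) else 0)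
    + (if q then A r * b0 else 0).
Proof.
rewrite (eq_bigr (fun k : 'I_r.+1 => A k * B k +
   ((if p && (k == 0%N :> nat) then a0 * (B k + (if q && (r - k == 0)%N then b0 else 0)) else 0)
   + A k * (if q && (r - k == 0)%N then b0 else 0)))); last first.
  by move=> k _; case: ifP => _; ring.
rewrite big_split /= big_split /= -addrA; congr (_ + (_ + _)).
  rewrite big_ord_recl /= eqxx andbT subn0 big1 ?addr0 //.
  by move=> k _; rewrite andbF.
rewrite big_ord_recr /= big1 ?add0r ?subnn ?andbT.
  by case: q; rewrite ?mulr0.
move=> k _; have := ltn_ord k; case: q => //= Hk; last by rewrite mulr0.
by rewrite subn_eq0 leqNgt ltn_ord /= mulr0.
Qed.

Lemma P_lie_inv n a : is_lie n a -> forall r z c,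
  P n a r (fun j => z j + c)
  = P n a r z + (if (n == 1%N) && (r == 0%N) then c * phi (a [:: false]) else 0).
Proof.
elim=> {n a}.
- move=> r z c; rewrite /P /PP /= /ncword /=.
  case: r => [|[|r]] /=; rewrite ?rmorph1 ?rmorph0; ring.
- move=> r z c; rewrite /P /PP /= /ncword /=.
  case: r => [|[|r]] /=; rewrite ?rmorph1 ?rmorph0; ring.
- move=> i j a b Hla IHa Hlb IHb r z c.
  rewrite !P_sub.
  rewrite (@P_bracket _ i j) // (@P_bracket _ j i b a) ?(addnC j i) //.
  rewrite (@P_bracket _ i j) // (@P_bracket _ j i b a) ?(addnC j i) //.
  under eq_bigr => k _ do rewrite IHa (IHb (r - k)%N (fun l => z (k + l)%N) c).
  under [X in _ - X]eq_bigr => k _ do rewrite IHb (IHa (r - k)%N (fun l => z (k + l)%N) c).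
  rewrite (@corr_sum r (fun k => P i a k z) (fun k => P j b (r - k) (fun l => z (k + l)%N))).
  rewrite (@corr_sum r (fun k => P j b k z) (fun k => P i a (r - k) (fun l => z (k + l)%N))).
  rewrite subn0 /=.
  have -> : P j b r (fun l => z (0 + l)%N) = P j b r z by apply: PP_ext.
  have -> : P i a r (fun l => z (0 + l)%N) = P i a r z by apply: PP_ext.
  have -> : (if (i + j == 1)%N && (r == 0%N) then c * phi (ncmul i a b [:: false] - ncmul j b a [:: false]) else 0) = 0.
    case: ifP => // /andP [/eqP Hij _].
    case: i Hla {IHa} Hij => [|i] Hla Hij.
      by rewrite /ncmul !(@lie_deg0 _ _ Hla (erefl _)) mul0r mulr0 subrr rmorph0 mulr0.
    have Ej : j = 0%N by lia.
    by rewrite /ncmul !(@lie_deg0 _ _ Hlb Ej) mul0r mulr0 subrr rmorph0 mulr0.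
  case: (i == 1%N); case: (j == 1%N); case: (r == 0%N) => /=; ring.
- by move=> n r z c; rewrite !P_zero rmorph0 mulr0 andbC; case: ifP; rewrite ?addr0.
- move=> n a b _ IHa _ IHb r z c; rewrite !P_add IHa IHb.
  by case: ifP => _; rewrite ?addr0 // rmorphD; ring.
- move=> n c0 a _ IHa r z c; rewrite !P_scale IHa.
  by case: ifP => _; rewrite ?addr0 ?mulr0 // rmorphM; ring.
- move=> n a b _ IHa E r z c.
  by rewrite -!(@P_extc n a b) // IHa E.
Qed.

End Psec.
Arguments P {K}.
Arguments P_lie_inv {K}.
Arguments P_ext {K}.



Section ZsumSec.
Variable K : fieldType.

Lemma zsum0 (u : nat -> K) : zsum u 0 = 0.
Proof. by rewrite /zsum big_ord0. Qed.

Lemma zsumS (u : nat -> K) j : zsum u j.+1 = zsum u j + u j.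
Proof. by rewrite /zsum big_ord_recr. Qed.

Lemma zsum_ext (u v : nat -> K) j : (forall i, (i < j)%N -> u i = v i) ->
  zsum u j = zsum v j.
Proof. by move=> H; rewrite /zsum; apply: eq_bigr => i _; apply: H. Qed.

Lemma zsum_rev (u : nat -> K) m j : (j <= m)%N ->
  zsum (fun i => u (m.-1 - i)%N) j = zsum u m - zsum u (m - j).
Proof.
elim: j => [|j IH] Hj; first by rewrite zsum0 subn0 subrr.
rewrite zsumS IH ?(ltnW Hj) //.
have -> : (m - j = (m - j.+1).+1)%N by lia.
rewrite zsumS.
have -> : (m.-1 - j = m - j.+1)%N by lia.
ring.
Qed.

Lemma zsum_push (u : nat -> K) k j : (j <= k.+1)%N ->
  zsum (fun i => (fun i => match i with i'.+1 => u i' | 0 => - \sum_(l < k.+1) u l end)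
                   (k.+1.-1 - i)%N) j
  = zsum u k - zsum u (if j == k.+1 then k.+1 else (k - j)%N).
Proof.
have H1 : forall j0, (j0 <= k)%N ->
  zsum (fun i => (fun i => match i with i'.+1 => u i' | 0 => - \sum_(l < k.+1) u l end)
                   (k.+1.-1 - i)%N) j0 = zsum u k - zsum u (k - j0)%N.
  elim=> [|j0 IH] Hj; first by rewrite zsum0 subn0 subrr.
  rewrite zsumS IH ?(ltnW Hj) //=.
  have -> : (k - j0 = (k - j0.+1).+1)%N by lia.
  by rewrite zsumS; ring.
move=> Hj; case: eqP => [->|Hjk]; last by rewrite H1 //; lia.
by rewrite zsumS H1 // subnn zsum0 /= /zsum; ring.
Qed.

End ZsumSec.

Section Main.
Variable K : fieldType.
Variable phi : {rmorphism rat -> K}.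
Variable w : nat.
Variable f : ncpoly.
Hypothesis Hw : (2 < w)%N.
Hypothesis Hf : is_lie w f.
Hypothesis Hphi : forall q, ratr q = phi q.

Let g : ncpoly := fun u => part_y f u + part_x f u.
Let M := @ma K w f.

Lemma ma_P u r : M r u = if r == 0%N then 0 else P phi w f r (zsum u).
Proof.
rewrite /M /ma; case: eqP => // _; rewrite big_mkcond /=.
rewrite (eq_bigr (fun t : w.-tuple bool => (fun s : seq bool =>
   if count id s == r then phi (f s) * mon (zsum u) s else 0) t)).
  exact: (@SW_tuple _ w (fun s : seq bool => if count id s == r then phi (f s) * mon (zsum u) s else 0)).
move=> t _; case: ifP => // _; rewrite Hphi; congr (_ * _).
rewrite -(@mon_ma _ (zsum u) t w (size_tuple t)); apply: eq_bigl => i.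
by rewrite (tnth_nth false).
Qed.

Lemma Pinv r z c : P phi w f r (fun j => z j + c) = P phi w f r z.
Proof.
rewrite (P_lie_inv phi _ _ Hf) (_ : (w == 1%N) = false) ?addr0 //.
by apply/eqP; lia.
Qed.

Lemma P0 z : P phi w f 0 z = 0.
Proof.
rewrite (@P_ext _ phi w f 0 z (fun j => 0 + z 0%N)); last first.
  by move=> j; rewrite leqn0 => /eqP ->; rewrite add0r.
rewrite Pinv /P /PP; transitivity (SW w (fun _ => (0:K))); last exact: SW_0.
apply: SW_ext => s Hs; case: eqP => // Hc.
case: s Hs Hc => [|[] s] //= Hs Hc; first by move: Hw; rewrite -Hs.
by rewrite mul0r mulr0.
Qed.

Definition upd (z : nat -> K) r := fun j => if j == r.-1 then z r else z j.

Definition G r (z : nat -> K) :=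
  P phi w f r z + (z r - z r.-1)^-1 * (P phi w f r.-1 (upd z r) - P phi w f r.-1 z).

Lemma G_ext r z z' : (forall j, (j <= r)%N -> z j = z' j) -> G r z = G r z'.
Proof.
move=> H; rewrite /G (@P_ext _ phi w f r z z') // (@P_ext _ phi w f r.-1 z z'); last first.
  by move=> j Hj; apply: H; lia.
rewrite (@P_ext _ phi w f r.-1 (upd z r) (upd z' r)); last first.
  by move=> j Hj; rewrite /upd; case: eqP => _; apply: H => //; lia.
by rewrite !H //; lia.
Qed.

Lemma G_shift r z c : G r (fun j => z j + c) = G r z.
Proof.
rewrite /G Pinv (@P_ext _ phi w f r.-1 (upd (fun j => z j + c) r) (fun j => upd z r j + c)); last first.
  by move=> j _; rewrite /upd; case: eqP.
rewrite !Pinv; congr (_ + _ * _); congr (_^-1); ring.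
Qed.

Lemma sign_phi n : phi ((-1) ^+ n) = (-1) ^+ n.
Proof. by rewrite rmorphXn rmorphN1. Qed.

Lemma G_opp r z : (1 <= r <= w)%N -> G r (fun j => - z j) = (-1) ^+ (w - r) * G r z.
Proof.
move=> /andP [H1 H2].
rewrite /G (@P_ext _ phi w f r.-1 (upd (fun j => - z j) r) (fun j => - upd z r j)); last first.
  by move=> j _; rewrite /upd; case: eqP.
rewrite /P !PP_opp.
have -> : (w - r.-1 = (w - r).+1)%N by lia.
rewrite exprS (_ : - z r - - z r.-1 = - (z r - z r.-1)); last by ring.
rewrite invrN; ring.
Qed.

Lemma G_H r y : (1 <= r <= w)%N -> y r = 0 -> y r.-1 != 0 ->
  G r y = P phi w.-1 g r.-1 y.
Proof.
case: r => [|k] //= _ Hy Hk.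
rewrite /G /P /=.
have Hn : w = (w.-1).+1 by lia.
move: (w.-1) Hn => n Hn; rewrite Hn.
rewrite (@PP_lastP _ n _ k y Hy).
rewrite (@PP_ext _ n.+1 _ k (upd y k.+1) (fun j => if j == k then 0 else y j)); last first.
  by move=> j _; rewrite /upd /= Hy.
rewrite PP_lastH /= Hy sub0r mulrA mulVf ?oppr_eq0 // mul1r.
rewrite -PP_add; apply: PP_extc => s _.
by rewrite /g /part_y /part_x rmorphD.
Qed.

Lemma teru_ma r u : (1 <= r)%N -> teru M r u = G r (zsum u).
Proof.
case: r => [|[|k]] // _.
  rewrite /teru /= ma_P /G /= !P0 subrr mulr0 addr0 //.
rewrite /teru /= !ma_P /G /=.
rewrite (@P_ext _ phi w f k.+1 (zsum _) (upd (zsum u) k.+2)); last first.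
  move=> j Hj; rewrite /upd /=; case: eqP => [->|Hjk].
    by rewrite !zsumS (@zsum_ext _ _ u k) ?eqxx; [ring|move=> i Hi; rewrite (ltn_eqF Hi)].
  by apply: zsum_ext => i Hi; rewrite (_ : (i == k) = false) //; apply/eqP; lia.
by rewrite [zsum u k.+2]zsumS addrAC subrr add0r.
Qed.

Lemma mantar_ma m u : (1 <= m <= w)%N -> mantar M m u = M m u.
Proof.
move=> /andP [H1 H2].
rewrite /mantar !ma_P (_ : (m == 0%N) = false); last by apply/eqP; lia.
rewrite (@P_ext _ phi w f m _ (fun j => - zsum u (m - j)%N + zsum u m)); last first.
  by move=> j Hj; rewrite zsum_rev //; ring.
rewrite Pinv /P PP_opp PP_rev.
rewrite (@PP_extc _ w (fun s => phi (f (rev s))) (fun s => phi ((-1) ^+ w.-1) * phi (f s))); last first.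
  by move=> s _; rewrite (@lie_anti _ _ Hf) rmorphM.
rewrite PP_scale sign_phi !mulrA -!exprD.
have -> : (m.-1 + (w - m) + w.-1 = (w.-1).*2)%N by lia.
by rewrite -muln2 exprM sqrr_sign mul1r.
Qed.

Lemma teru_mantar m u : (1 <= m <= w)%N -> teru (mantar M) m u = teru M m u.
Proof.
move=> /andP [H1 H2]; rewrite /teru; case: ifP => Hm.
  by rewrite mantar_ma // H1.
move/negbT: Hm => Hm.
by rewrite !mantar_ma //; apply/andP; split; lia.
Qed.

Lemma chainL r u : (1 <= r <= w)%N -> u r.-1 != 0 ->
  teru M r u = P phi w.-1 g r.-1 (fun j => zsum u j - zsum u r).
Proof.
move=> Hr Hu; have H1 : (1 <= r)%N by case/andP: Hr.
rewrite teru_ma // -(G_shift r (zsum u) (- zsum u r)) G_H //.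
- by rewrite subrr.
- case: r Hr Hu {H1} => [|k] //= _ Hu.
  by rewrite zsumS opprD addrA subrr sub0r oppr_eq0.
Qed.

Lemma chainR r u : (1 <= r <= w)%N -> zsum u r != 0 ->
  push (mantar (teru (mantar M))) r u
  = (-1) ^+ (w.-1) * P phi w.-1 (anti g) r.-1 (fun j => zsum u j - zsum u r).
Proof.
case: r => [|k] // Hr Hz.
rewrite /push {1}/mantar /= teru_mantar // teru_ma //.
rewrite (@G_ext _ _ (fun j => - zsum u (if j == k.+1 then k.+1 else (k - j)%N) + zsum u k)); last first.
  by move=> j Hj; rewrite zsum_push //; ring.
rewrite G_shift G_opp //.
rewrite -(G_shift _ (fun j => zsum u (if j == k.+1 then k.+1 else (k - j)%N)) (- zsum u k.+1)).
rewrite G_H //=; last first.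
- by rewrite (_ : (k == k.+1) = false) ?subnn ?zsum0 ?sub0r ?oppr_eq0 //; elim: k {Hr Hz}.
- by rewrite eqxx subrr.
rewrite (@P_ext _ phi w.-1 g k _ (fun j => (fun j => zsum u j - zsum u k.+1) (k - j)%N)); last first.
  by move=> j Hj; rewrite (_ : (j == k.+1) = false) //; apply/eqP; lia.
rewrite /P (@PP_rev _ w.-1 (fun s => phi (g s)) k (fun j => zsum u j - zsum u k.+1)) mulrA -exprD.
have -> : (k + (w - k.+1) = w.-1)%N by lia.
done.
Qed.

End Main.



Section Indep.
Variable w : nat.

Definition Xm (i : nat) : {mpoly rat[w]} :=
  if (i < w)%N =P true is ReflectT H then 'X_(Ordinal H) else 0.

Definition Um (i : nat) : 'X_{1..w} :=
  if (i < w)%N =P true is ReflectT H then U_(Ordinal H)%MM else 0%MM.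

Lemma generic_Xm i : generic w i = FracField.tofrac (Xm i).
Proof. by rewrite /generic /Xm; case: (_ =P true) => //= _; rewrite rmorph0. Qed.

Lemma Xm_U i : (i < w)%N -> Xm i = 'X_[Um i].
Proof. by rewrite /Xm /Um; case: (_ =P true). Qed.

Fixpoint mmon (j0 : nat) (s : seq bool) : 'X_{1..w} :=
  match s with
  | [::] => 0%MM
  | b :: s' => if b then mmon j0.+1 s' else (Um j0 + mmon j0 s')%MM
  end.

Lemma mon_Xm s j0 : (j0 + count id s < w)%N ->
  mon (fun j => Xm (j0 + j)%N) s = 'X_[mmon j0 s].
Proof.
elim: s j0 => [|b s IH] j0 /= H; first by rewrite mpolyX0.
case: b H => /= H.
  rewrite -IH; last by lia.
  by apply: mon_ext => j _; rewrite addSnnS.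
rewrite IH ?mpolyXD ?addn0 ?Xm_U //; lia.
Qed.

Lemma mmon_low s j0 (i : 'I_w) : (i < j0)%N -> mmon j0 s i = 0%N.
Proof.
elim: s j0 => [|b s IH] j0 /= H; first by rewrite mnm0E.
case: b; first by apply: IH; lia.
rewrite mnmDE IH // addn0 /Um; case: (_ =P true) => [Hj|_]; last by rewrite mnm0E.
rewrite mnm1E (_ : (Ordinal Hj == i) = false) //; apply/eqP => E; move: H; rewrite -E /=; lia.
Qed.

Lemma mmon_at s j0 (H : (j0 < w)%N) : mmon j0 (false :: s) (Ordinal H) != 0%N.
Proof.
rewrite /= mnmDE /Um; case: (_ =P true) => [Hj|//].
rewrite mnm1E; have -> : Ordinal Hj = Ordinal H by apply: val_inj.
by rewrite eqxx.
Qed.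

Lemma mmon_inj s t j0 : size s = size t -> (j0 + count id s < w)%N ->
  mmon j0 s = mmon j0 t -> s = t.
Proof.
elim: s t j0 => [|b s IH] [|c t] j0 //= [Hst] Hc E.
have Hj : (j0 < w)%N by lia.
case: b c Hc E => [] [] /= Hc E.
- by rewrite (IH t j0.+1) //; lia.
- exfalso; move: (@mmon_at t j0 Hj); rewrite /= -E (@mmon_low s j0.+1) //.
- exfalso; move: (@mmon_at s j0 Hj); rewrite /= E (@mmon_low t j0.+1) //.
- rewrite (IH t j0) //.
  apply/mnmP => i; move/mnmP: E => /(_ i); rewrite !mnmDE; lia.
Qed.

End Indep.

Section Final.
Variable w : nat.

Definition phiw : {rmorphism rat -> ratfun w} :=
  (@FracField.tofrac {mpoly rat[w]}) \o (@mpolyC w rat).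

Lemma Hphiw q : ratr q = phiw q.
Proof. by rewrite (fmorph_eq_rat phiw). Qed.

Lemma tofrac_neq0 (p : {mpoly rat[w]}) : meval (fun _ => 1) p != 0 ->
  FracField.tofrac p != 0.
Proof. by rewrite tofrac_eq0; apply: contra => /eqP ->; rewrite meval0. Qed.

Lemma generic_neq0 i : (i < w)%N -> generic w i != 0.
Proof.
move=> Hi; rewrite generic_Xm; apply: tofrac_neq0.
rewrite /Xm; case: (_ =P true) => [H|H]; last by exfalso; apply: H.
by rewrite mevalXU oner_eq0.
Qed.

Lemma zsum_generic_neq0 r : (1 <= r <= w)%N -> zsum (generic w) r != 0.
Proof.
move=> /andP [H1 H2].
have -> : zsum (generic w) r = FracField.tofrac (\sum_(i < r) Xm w i).
  by rewrite rmorph_sum /zsum; apply: eq_bigr => i _; rewrite generic_Xm.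
apply: tofrac_neq0; rewrite raddf_sum /=.
rewrite (eq_bigr (fun _ => 1)); last first.
  move=> i _; rewrite /Xm; case: (_ =P true) => [H|H]; first by rewrite mevalXU.
  exfalso; apply: H; apply/idP; have := ltn_ord i; lia.
by rewrite sumr_const card_ord Num.Theory.pnatr_eq0 -lt0n.
Qed.

Lemma indep n k (d : ncpoly) : (k < w)%N ->
  P phiw n d k (fun j => zsum (generic w) j - zsum (generic w) k.+1) = 0 ->
  forall s, size s = n -> count id s = k -> d s = 0.
Proof.
move=> Hk H0 s0 Hs0 Hc0.
pose Yh j : {mpoly rat[w]} := \sum_(i < j) Xm w i - \sum_(i < k.+1) Xm w i.
have E1 : P phiw n d k (fun j => zsum (generic w) j - zsum (generic w) k.+1)
   = FracField.tofrac (PP n (fun s => (d s)%:MP) k Yh).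
  rewrite PP_morph /P; apply: PP_ext => j _.
  rewrite /Yh rmorphB !rmorph_sum /zsum; congr (_ - _); apply: eq_bigr => i _;
  by rewrite generic_Xm.
have Q0 : PP n (fun s => (d s)%:MP) k Yh = 0.
  by apply/eqP; rewrite -tofrac_eq0 -E1 H0.
pose T j : {mpoly rat[w]} := if (j < k.+1)%N then Xm w j else 0.
pose lq := [tuple T i.+1 - T i | i < w].
have C1 : forall i, (i < w)%N -> comp_mpoly lq (Xm w i) = T i.+1 - T i.
  move=> i Hi; rewrite /Xm; case: (_ =P true) => [Hi'|H]; last by exfalso; apply: H.
  by rewrite comp_mpolyXU -(tnth_nth 0) tnth_mktuple.
have C2 : forall j, (j <= k)%N -> comp_mpoly lq (Yh j) = Xm w j.
  move=> j Hj; rewrite /Yh rmorphB !rmorph_sum.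
  rewrite (eq_bigr (fun i : 'I_j => T i.+1 - T i)); last first.
    by move=> i _; apply: C1; have := ltn_ord i; lia.
  rewrite [X in _ - X](eq_bigr (fun i : 'I_k.+1 => T i.+1 - T i)); last first.
    by move=> i _; apply: C1; have := ltn_ord i; lia.
  rewrite -(big_mkord xpredT (fun i => T i.+1 - T i)).
  rewrite -(big_mkord xpredT (fun i => T i.+1 - T i)).
  rewrite !telescope_sumr // /T ltnn.
  have -> : (j < k.+1)%N by lia.
  by rewrite ltn0Sn; ring.
have Q1 : PP n (fun s => (d s)%:MP) k (Xm w) = 0.
  rewrite -(rmorph0 (comp_mpoly lq)) -Q0 PP_morph.
  rewrite (@PP_ext _ n _ k _ (fun j => comp_mpoly lq (Yh j))); last first.
    by move=> j Hj; rewrite C2.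
  by apply: PP_extc => s _; symmetry; exact: comp_mpolyC.
have := congr1 (mcoeff (mmon w 0 s0)) Q1; rewrite mcoeff0 => <-.
rewrite /PP (@SW_morph _ _ (mcoeff (mmon w 0 s0)) (mcoeffD _)).
rewrite -[LHS](@SW_delta _ n s0 (d s0)) //; apply: SW_ext => s Hs.
case: (count id s =P k) => Hc.
  rewrite mcoeffCM (@mon_ext _ s (Xm w) (fun j => Xm w (0 + j))) //.
  rewrite mon_Xm ?add0n ?Hc // mcoeffX.
  have [->|Hne] := eqVneq s s0; first by rewrite !eqxx mulr1.
  rewrite (_ : (mmon w 0 s == mmon w 0 s0) = false) ?mulr0 //.
  apply/eqP => E; move/eqP: Hne; apply; apply: (@mmon_inj w s s0 0) => //.
    by rewrite Hs Hs0.
  by rewrite add0n Hc.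
rewrite mcoeff0; case: eqP => // E; exfalso; apply: Hc; by rewrite E.
Qed.

End Final.

Theorem lemma3p2 (w : nat) (f : ncpoly) :
  (2 < w)%N -> is_lie w f ->
  let g : ncpoly := fun u => part_y f u + part_x f u in
  (forall u : seq bool, g u = (-1) ^+ (w - 1) * anti g u) <->
  (forall r : nat, (1 <= r <= w)%N ->
     teru (@ma (ratfun w) w f) r (generic w)
     = push (mantar (teru (mantar (@ma (ratfun w) w f)))) r (generic w)).
Proof.
move=> Hw Hf g.
have key : forall r, (1 <= r <= w)%N ->
  (teru (@ma (ratfun w) w f) r (generic w)
     = push (mantar (teru (mantar (@ma (ratfun w) w f)))) r (generic w)) <->
  P (phiw w) w.-1 (fun s => g s - (-1) ^+ (w - 1) * anti g s) r.-1
    (fun j => zsum (generic w) j - zsum (generic w) r) = 0.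
  move=> r Hr.
  have Hu : generic w r.-1 != 0 by apply: generic_neq0; case/andP: Hr => ? ?; lia.
  rewrite (@chainL _ (phiw w) w f Hw Hf (@Hphiw w) r _ Hr Hu).
  rewrite (@chainR _ (phiw w) w f Hw Hf (@Hphiw w) r _ Hr (@zsum_generic_neq0 w r Hr)).
  rewrite P_sub P_scale rmorphXn rmorphN1 subn1.
  split; first by move=> ->; rewrite subrr.
  by move/eqP; rewrite subr_eq0 => /eqP.
split.
- move=> H r Hr; apply/(key r Hr).
  rewrite (@P_extc _ _ _ _ (fun _ => 0)) ?P_zero // => s.
  by apply/eqP; rewrite subr_eq0; apply/eqP; exact: H.
- move=> H u.
  have Z : forall v, size v != (w - 1)%N -> g v = 0.
    move=> v Hv; rewrite /g /part_y /part_x !(@lie_supp _ _ Hf) ?addr0 // size_rcons;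
    apply/eqP; move/eqP: Hv; lia.
  have [Hs|Hs] := eqVneq (size u) (w - 1)%N; last first.
    by rewrite /anti !Z ?mulr0 // size_rev.
  have Hc := count_size id u.
  have Hr : (1 <= (count id u).+1 <= w)%N by apply/andP; split; lia.
  have := proj1 (key _ Hr) (H _ Hr) => /= H0.
  have Hk : (count id u < w)%N by lia.
  have Hsz : size u = w.-1 by rewrite Hs subn1.
  by move: (@indep w w.-1 (count id u) _ Hk H0 u Hsz (erefl _)) => /eqP; rewrite subr_eq0 => /eqP.
Qed.
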